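(* Let $\ell,\tilde\ell\in\mathcal{D}^-[0,\infty)$ and $r,\tilde r\in\mathcal{D}^+[0,\infty)$ with $\tilde\ell\le\ell$, $r=\tilde r$ and $\inf_{t\ge0}(r(t)-\ell(t))>0$. Given $\psi\in\mathcal{D}[0,\infty)$, let $(\eta_\ell,\eta_r)$ and $(\eta_{\tilde\ell},\eta_{\tilde r})$ be the constraining processes associated with the SP for $\psi$ on $[\ell(\cdot),r(\cdot)]$ and on $[\tilde\ell(\cdot),\tilde r(\cdot)]$, respectively. Then for every $t\ge0$, $\eta_r(t)\ge\eta_{\tilde r}(t)$ and $\eta_\ell(t)\ge\eta_{\tilde\ell}(t)$.
   Context: $\mathcal{D}[0,\infty)$ denotes the càdlàg functions $[0,\infty)\to(-\infty,\infty)$; $\mathcal{D}^-[0,\infty)$ (resp. $\mathcal{D}^+[0,\infty)$) denotes càdlàg functions with values in $[-\infty,\infty)$ (resp. $(-\infty,\infty]$). SP: $(\phi,\eta)\in\mathcal{D}[0,\infty)^2$ solves the SP on $[\ell(\cdot),r(\cdot)]$ for $\psi$ if (1) $\phi(t)=\psi(t)+\eta(t)\in[\ell(t),r(t)]$ for all $t\ge0$; (2) $\eta=\eta_\ell-\eta_r$ with $\eta_\ell,\eta_r$ non-decreasing and $\int_0^\infty \mathbb{I}_{\{\phi(s)>\ell(s)\}}\,d\eta_\ell(s)=0$, $\int_0^\infty \mathbb{I}_{\{\phi(s)<r(s)\}}\,d\eta_r(s)=0$. The pair $(\eta_\ell,\eta_r)$ is called the pair of constraining processes associated with the SP. When $\inf_t(r(t)-\ell(t))>0$,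 the SP has a unique solution for every $\psi\in\mathcal{D}[0,\infty)$. *)

(* Defs.v *)
From HB Require Import structures.
From mathcomp Require Import all_boot all_order all_algebra.
From mathcomp Require Import all_classical all_reals all_analysis.
Set Implicit Arguments. Unset Strict Implicit. Unset Printing Implicit Defensive.
Import Order.TTheory GRing.Theory Num.Theory.
Import numFieldNormedType.Exports.
Local Open Scope classical_set_scope.
Local Open Scope ring_scope.

(* Càdlàg on [0,oo): right-continuous at every t >= 0, left limit (in T)
   exists at every t > 0. Values at t < 0 are irrelevant. *)
Definition cadlag (R : realType) (T : topologicalType) (f : R -> T) : Prop :=
  forall t : R, 0 <= t ->
    (f @ at_right t --> f t) /\ (0 < t -> exists L : T, f @ at_left t --> L).

Definition D0 (R : realType) (f : R -> R) : Prop := cadlag f.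

Definition Dminus (R : realType) (f : R -> \bar R) : Prop :=
  cadlag f /\ (forall t, 0 <= t -> f t != +oo%E)
  /\ (forall t, 0 < t -> lim (f @ at_left t) != +oo%E).

Definition Dplus (R : realType) (f : R -> \bar R) : Prop :=
  cadlag f /\ (forall t, 0 <= t -> f t != -oo%E)
  /\ (forall t, 0 < t -> lim (f @ at_left t) != -oo%E).

Definition nondecr0 (R : realType) (f : R -> R) : Prop :=
  forall s t : R, 0 <= s -> s <= t -> f s <= f t.

(* int_{[0,oo)} 1_A(s) d eta(s) = 0, where d eta is the Lebesgue-Stieltjes
   measure of the nondecreasing right-continuous eta on [0,oo), with the
   convention eta(0-) = 0 (so d eta has an atom of size eta(0) at 0). *)
Definition stieltjes_zero (R : realType) (eta : R -> R) (A : set R) : Prop :=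
  exists mu : {measure set R -> \bar R},
    (forall t : R, 0 <= t -> mu [set` `]-oo, t]] = (eta t)%:E) /\
    mu [set` `]-oo, 0[] = 0%E /\
    (\int[mu]_(s in [set` (`[0%R, +oo[ : interval R)]) (\1_A s)%:E = 0)%E.

Definition SP (R : realType) (l r : R -> \bar R) (psi phi eta etal etar : R -> R)
  : Prop :=
  D0 phi /\ D0 eta /\
  (forall t, 0 <= t -> phi t = psi t + eta t) /\
  (forall t, 0 <= t -> (l t <= (phi t)%:E)%E /\ ((phi t)%:E <= r t)%E) /\
  (forall t, 0 <= t -> eta t = etal t - etar t) /\
  nondecr0 etal /\ nondecr0 etar /\
  stieltjes_zero etal [set s | (l s < (phi s)%:E)%E] /\
  stieltjes_zero etar [set s | ((phi s)%:E < r s)%E].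

(* Main.v *)
Require Import Defs.
From HB Require Import structures.
From mathcomp Require Import all_boot all_order all_algebra.
From mathcomp Require Import all_classical all_reals all_analysis.
From mathcomp Require Import lra.
Import Order.TTheory GRing.Theory Num.Theory.
Import numFieldNormedType.Exports.
Local Open Scope classical_set_scope.
Local Open Scope ring_scope.
Section Core.
Context {R : realType}.

Definition Wit (Xd : R -> R) (TX : R -> Prop) :=
  forall s t, 0 <= s -> s < t -> Xd s < Xd t -> exists z, s < z <= t /\ TX z.
Definition LeftC (Xd : R -> R) (TX : R -> Prop) :=
  forall z, 0 < z -> ~ TX z -> forall e, 0 < e -> exists w, 0 <= w < z /\ Xd z <= Xd w + e.

Lemma ge_eps (x : R) : (forall e, 0 < e -> - e <= x) -> 0 <= x.
Proof.
move=> H; rewrite leNgt; apply/negP => hx.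
have := H (- x / 2); rewrite ltr_pdivlMr // mul0r oppr_gt0 => /(_ hx). lra.
Qed.

Lemma stepX (Xu Xd Yu Yd : R -> R) (TX : R -> Prop) (x y : R) :
  nondecr0 Xu -> nondecr0 Xd -> Wit Xd TX -> LeftC Xd TX ->
  (forall z, 0 <= z -> TX z -> Yu z - Yd z <= Xu z - Xd z) ->
  0 <= x -> 0 <= Xu x - Xd x ->
  (forall z, x <= z < y -> 0 <= Yu z - Yd z) ->
  forall w, x <= w < y -> 0 <= Xu w - Xd w.
Proof.
move=> hXu hXd hW hL hG x0 hx hY w /andP[xw wy].
pose S := [set z | x <= z <= w /\ (z = x \/ TX z)].
have S0 : S !=set0 by exists x; split; [rewrite lexx xw|left].
have Sub : ubound S w by move=> z [/andP[]].
have hs : has_sup S by split => //; exists w.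
set zs := sup S.
have xzs : x <= zs by apply: ub_le_sup; [exists w|split; [rewrite lexx xw|left]].
have zsw : zs <= w by apply: ge_sup.
have Sgood : forall z, S z -> 0 <= Xu z - Xd z.
  move=> z [/andP[xz zw] [->|Tz]] //.
  apply: le_trans (hG z _ Tz); [apply: hY; apply/andP; split => //; lra|lra].
have c1 : 0 <= Xu zs - Xd zs.
  have [Tz|nTz] := pselect (TX zs).
    apply: le_trans (hG zs _ Tz); [apply: hY; apply/andP; split => //; lra|lra].
  have [exz|nexz] := eqVneq zs x; first by rewrite exz.
  have xlt : x < zs by rewrite lt_neqAle eq_sym nexz xzs.
  apply: ge_eps => e e0.
  have [w0 [/andP[w00 w0z] hw0]] := hL zs ltac:(lra) nTz e e0.
  have [s Ss w0s] := sup_gt S0 w0z.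
  have szs : s <= zs by apply: ub_le_sup => //; exists w.
  have := Sgood s Ss.
  have := hXd w0 s w00 (ltW w0s).
  have s0 : 0 <= s by case: Ss => /andP[? ?] _; lra.
  have := hXu s zs s0 szs.
  lra.
have [ezw|nezw] := eqVneq zs w; first by rewrite -ezw.
have zsltw : zs < w by rewrite lt_neqAle nezw zsw.
have hd : Xd w <= Xd zs.
  rewrite leNgt; apply/negP => hlt.
  have [z [/andP[zsz zw] Tz]] := hW zs w ltac:(lra) zsltw hlt.
  have : S z by split; [apply/andP; split => //; lra|right].
  move=> Sz; have : z <= zs by apply: ub_le_sup => //; exists w.
  lra.
have := hXu zs w ltac:(lra) (ltW zsltw). lra.
Qed.

Lemma constX (Xu Xd : R -> R) (TX : R -> Prop) (s dl : R) :
  nondecr0 Xu -> Wit Xd TX -> 0 <= s ->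
  (forall z, s <= z < s + dl -> ~ TX z) ->
  forall z, s <= z < s + dl -> Xu s - Xd s <= Xu z - Xd z.
Proof.
move=> hXu hW s0 hn z /andP[sz zd].
have [->|nsz] := eqVneq s z; first by rewrite lexx.
have slt : s < z by rewrite lt_neqAle nsz sz.
have hd : Xd z <= Xd s.
  rewrite leNgt; apply/negP => hlt.
  have [z' [/andP[sz' z'z] Tz']] := hW s z s0 slt hlt.
  by apply: (hn z') => //; apply/andP; split; lra.
have := hXu s z s0 sz; lra.
Qed.

Arguments constX {Xu Xd TX s dl}.
Arguments stepX {Xu Xd Yu Yd TX x y}.
Lemma leftX (Xu Xd : R -> R) (TX : R -> Prop) (s : R) :
  nondecr0 Xu -> nondecr0 Xd -> LeftC Xd TX -> 0 < s -> ~ TX s ->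
  (forall z, 0 <= z < s -> 0 <= Xu z - Xd z) -> 0 <= Xu s - Xd s.
Proof.
move=> hXu hXd hL s0 nT hb; apply: ge_eps => e e0.
have [w [/andP[w0 ws] hw]] := hL s s0 nT e e0.
have := hb w ltac:(apply/andP; split; lra).
have := hXu w s w0 (ltW ws). lra.
Qed.

Lemma core (Au Ad Bu Bd : R -> R) (TA TB : R -> Prop) :
  nondecr0 Au -> nondecr0 Ad -> nondecr0 Bu -> nondecr0 Bd ->
  Wit Ad TA -> Wit Bd TB -> LeftC Ad TA -> LeftC Bd TB ->
  (~ TA 0 -> Ad 0 <= 0) -> (~ TB 0 -> Bd 0 <= 0) ->
  0 <= Au 0 -> 0 <= Bu 0 ->
  (forall z, 0 <= z -> TA z -> Bu z - Bd z <= Au z - Ad z) ->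
  (forall z, 0 <= z -> TB z -> Au z - Ad z <= Bu z - Bd z) ->
  (forall z, 0 <= z -> TA z -> ~ TB z) ->
  (forall s, 0 <= s -> exists2 dl, 0 < dl &
     (forall z, s <= z < s + dl -> ~ TA z) \/ (forall z, s <= z < s + dl -> ~ TB z)) ->
  forall t, 0 <= t -> 0 <= Au t - Ad t /\ 0 <= Bu t - Bd t.
Proof.
move=> hAu hAd hBu hBd hWA hWB hLA hLB hZA hZB hA0 hB0 hGA hGB hAB hF t t0.
pose good z := 0 <= Au z - Ad z /\ 0 <= Bu z - Bd z.
have point : forall s, 0 <= s -> (~ TA s -> 0 <= Au s - Ad s) ->
    (~ TB s -> 0 <= Bu s - Bd s) -> good s.
  move=> s s0 ha hb.
  have [Ta|nTa] := pselect (TA s).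
    have hb' := hb (hAB s s0 Ta).
    by split => //; apply: le_trans (hGA s s0 Ta).
  have ha' := ha nTa; split => //.
  have [Tb|nTb] := pselect (TB s); last exact: hb.
  by apply: le_trans (hGB s s0 Tb).
have g0 : good 0.
  apply: point => //.
    by move=> /hZA; lra.
  by move=> /hZB; lra.
pose G := [set y | 0 <= y <= t /\ forall z, 0 <= z <= y -> good z].
have G0 : G 0.
  split; first by rewrite lexx t0.
  by move=> z /andP[z0 z0']; have -> : z = 0 by apply/eqP; rewrite eq_le z0 z0'.
have GS : G !=set0 by exists 0.
have Gub : ubound G t by move=> y [/andP[]].
have hs : has_sup G by split => //; exists t.
set s := sup G.
have s0 : 0 <= s by apply: ub_le_sup => //; exists t.
have st : s <= t by apply: ge_sup.
have before : forall z, 0 <= z < s -> good z.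
  move=> z /andP[z0 zs].
  have [y Gy zy] := sup_gt GS zs.
  by case: Gy => _ /(_ z); apply; apply/andP; split; lra.
have gs : good s.
  have [->|ns0] := eqVneq s 0; first exact: g0.
  have sp : 0 < s by rewrite lt_neqAle eq_sym ns0 s0.
  apply: point => //.
    move=> nT; apply: (@leftX Au Ad TA s hAu hAd hLA sp nT).
    by move=> z /before [].
  move=> nT; apply: (@leftX Bu Bd TB s hBu hBd hLB sp nT).
  by move=> z /before [].
have upto : forall z, 0 <= z <= s -> good z.
  move=> z /andP[z0 zs].
  have [->|nzs] := eqVneq z s; first exact: gs.
  by apply: before; apply/andP; split => //; rewrite lt_neqAle nzs zs.
have [est|nest] := eqVneq s t.
  by rewrite -est; apply: upto; rewrite s0 lexx.
have slt : s < t by rewrite lt_neqAle nest st.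
have [dl dl0 hcase] := hF s s0.
have right : forall z, s <= z < s + dl -> good z.
  case: hcase => hn z hz.
  - have ha : forall z, s <= z < s + dl -> 0 <= Au z - Ad z.
      move=> z' hz'; have := constX hAu hWA s0 hn z' hz'; case: gs; lra.
    split; first exact: ha.
    have gb : 0 <= Bu s - Bd s by case: gs.
    exact: (stepX hBu hBd hWB hLB hGB s0 gb ha z hz).
  - have hb : forall z, s <= z < s + dl -> 0 <= Bu z - Bd z.
      move=> z' hz'; have := constX hBu hWB s0 hn z' hz'; case: gs; lra.
    split; last exact: hb.
    have ga : 0 <= Au s - Ad s by case: gs.
    exact: (stepX hAu hAd hWA hLA hGA s0 ga hb z hz).
pose y := Num.min (s + dl / 2) t.
have ys : s < y by rewrite /y lt_min slt andbT ltrDl divr_gt0.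
have Gy : G y.
  split.
    apply/andP; split; first lra.
    by rewrite /y ge_min lexx orbT.
  move=> z /andP[z0 zy].
  have [zs|sz] := leP z s; first by apply: upto; rewrite z0 zs.
  apply: right; apply/andP; split; first lra.
  have : y <= s + dl / 2 by rewrite /y ge_min lexx.
  lra.
have : y <= s by apply: ub_le_sup => //; exists t.
lra.
Qed.
Lemma ge_eps0 (x : R) : (forall e, 0 < e -> x <= e) -> x <= 0.
Proof. move=> H; rewrite -oppr_ge0; apply: ge_eps => e e0; have := H e e0; lra. Qed.
End Core.

Section Meas.
Context {R : realType}.
Variable (mu : {measure set R -> \bar R}).

Lemma mu_null (A B : set R) : measurable B ->
  B `<=` [set` (`[0%R, +oo[ : interval R)] `&` A ->
  (\int[mu]_(s in [set` (`[0%R, +oo[ : interval R)]) (\1_A s)%:E = 0)%E ->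
  mu B = 0%E.
Proof.
move=> mB BA hI; apply/eqP; rewrite eq_le measure_ge0 andbT -hI.
rewrite ge0_integralE; last by move=> x _; rewrite lee_fin.
apply: ereal_sup_ubound => /=; exists (indic_nnsfun R mB); last first.
  by rewrite sintegral_indic.
move=> x /=; rewrite /patch measurable_realfun.mindicE /indic.
have [Bx|nBx] := pselect (B x).
  have [Dx Ax] := BA x Bx.
  rewrite ifT; last exact/mem_set.
  by rewrite !mem_set.
rewrite memNset //=; case: ifP => _; last by [].
by rewrite lee_fin; case: (x \in A).
Qed.

Lemma setNyc_split (s t : R) : s <= t ->
  [set` `]-oo, t]] = [set` `]-oo, s]] `|` [set` `]s, t]].
Proof.
move=> st; rewrite set_itvNyc set_itvNyc set_itvoc.
apply/seteqP; split => x /=.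
  by move=> xt; have [xs|xs] := leP x s; [left|right; apply/andP; split].
by case=> [xs|/andP[_ ->]] //; apply: le_trans st.
Qed.

Lemma setNyc_disj (s t : R) : [set` `]-oo, s]] `&` [set` `]s, t]] = set0.
Proof.
rewrite set_itvNyc set_itvoc; apply/seteqP; split => x //= [xs /andP[sx _]].
by move: (lt_le_trans sx xs); rewrite ltxx.
Qed.

Lemma setNyc_1 (z : R) : [set` `]-oo, z]] = [set` `]-oo, z[] `|` [set z].
Proof.
rewrite set_itvNyc set_itvNyo; apply/seteqP; split => x /=.
  by rewrite le_eqVlt => /orP[/eqP->|xz]; [right|left].
by case=> [/ltW|->].
Qed.

Lemma setNyc_1disj (z : R) : [set` `]-oo, z[] `&` [set z] = set0.
Proof.
rewrite set_itvNyo; apply/seteqP; split => x //= [xz xe].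
by move: xz; rewrite xe ltxx.
Qed.

Lemma sz_wit (eta : R -> R) (A : set R) :
  (forall t : R, 0 <= t -> mu [set` `]-oo, t]] = (eta t)%:E) ->
  (\int[mu]_(s in [set` (`[0%R, +oo[ : interval R)]) (\1_A s)%:E = 0)%E ->
  forall s t, 0 <= s -> s < t -> eta s < eta t -> exists z, s < z <= t /\ ~ A z.
Proof.
move=> hmu hI s t s0 st est; apply: contrapT => H.
have sub : [set` `]s, t]] `<=` [set` (`[0%R, +oo[ : interval R)] `&` A.
  move=> z; rewrite set_itvoc /= => /andP[sz zt]; split.
    by rewrite /= in_itv /= andbT; apply: le_trans (ltW sz).
  by apply: contrapT => nA; apply: H; exists z; rewrite sz zt.
have m0 := @mu_null A _ (measurable_itv _) sub hI.

have hU : mu ([set` `]-oo, s]] `|` [set` `]s, t]]) =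
    (mu [set` `]-oo, s]] + mu [set` `]s, t]])%E.
  by apply: measureU => //; exact: setNyc_disj.
have := hmu t (le_trans s0 (ltW st)).
rewrite (setNyc_split s t (ltW st)) hU m0 adde0 hmu // => /eqP; rewrite eqe => /eqP; lra.
Qed.

Lemma sz_left (eta : R -> R) (A : set R) :
  (forall t : R, 0 <= t -> mu [set` `]-oo, t]] = (eta t)%:E) ->
  mu [set` `]-oo, 0[] = 0%E ->
  (\int[mu]_(s in [set` (`[0%R, +oo[ : interval R)]) (\1_A s)%:E = 0)%E ->
  forall z, 0 <= z -> A z -> forall e, 0 < e ->
  eta z <= e \/ exists w, 0 <= w < z /\ eta z <= eta w + e.
Proof.
move=> hmu h0 hI z z0 Az e e0.
have sub1 : [set z] `<=` [set` (`[0%R, +oo[ : interval R)] `&` A.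
  by move=> x /= ->; split => //; rewrite /= in_itv /= andbT.
have m1 := @mu_null A _ (measurable_set1 z) sub1 hI.
have hU : mu ([set` `]-oo, z[] `|` [set z]) = (mu [set` `]-oo, z[] + mu [set z])%E.
  by apply: measureU => //; exact: setNyc_1disj.
have ez : mu [set` `]-oo, z[] = (eta z)%:E.
  by rewrite -hmu // setNyc_1 hU m1 adde0.
pose F := fun n : nat => [set` `]-oo, z - (n.+1%:R)^-1]].
have mF : forall n, measurable (F n) by move=> n; exact: measurable_itv.
have bF : \bigcup_n F n = [set` `]-oo, z[].
  apply/seteqP; split => x /=.
    move=> [n _]; rewrite /F /= in_itv /= => xn.
    by apply: (le_lt_trans xn); rewrite ltrBlDr ltrDl invr_gt0 ltr0n.
  rewrite in_itv /= => xz.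
  exists (Num.truncn ((z - x)^-1)) => //; rewrite /F /= in_itv /=.
  have zx : 0 < z - x by rewrite subr_gt0.
  have := Num.Theory.truncnS_gt ((z - x)^-1).
  set m := (_.+1)%:R => hm.
  have m0 : 0 < m by rewrite /m ltr0n.
  rewrite lerBrDr -lerBrDl; rewrite -[leRHS]invrK lef_pV2 ?posrE ?invr_gt0 //.
  exact: ltW.
have ndF : {homo F : n m / (n <= m)%N >-> (n <= m)%O}.
  move=> n m nm; apply/subsetPset => x; rewrite /F /= !in_itv /= => h; apply: (le_trans h).
  by apply: lerB => //; rewrite lef_pV2 ?posrE ?ltr0n // ler_nat ltnS.
have cv : (mu \o F) n @[n --> \oo] --> (eta z)%:E.
  rewrite -ez -bF; exact: (nondecreasing_cvg_mu mF (bigcupT_measurable _ mF) ndF).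
have nd : nondecreasing_seq (mu \o F).
  by move=> n m nm; apply: le_measure; rewrite ?inE; [exact: mF|exact: mF|apply/subsetPset; exact: ndF].
have := @lte_lim _ (mu \o F) (eta z - e) nd (cvgP _ cv).
rewrite (cvg_lim _ cv) // lte_fin ltrBlDr ltrDl => /(_ e0) [N _ HN].
have := HN N (leqnn N); rewrite /= /F.
set w := z - _.
have [w0|w0] := leP 0 w.
  rewrite hmu // lee_fin => hw; right; exists w; split; last lra.
  by rewrite w0 /w ltrBlDr ltrDl invr_gt0 ltr0n.
move=> hw; left.
have : (mu [set` `]-oo, w]] <= mu [set` `]-oo, 0%R[])%E.
  apply: le_measure; rewrite ?inE; try exact: measurable_itv.
  by move=> x /=; rewrite !in_itv /= => xw; apply: le_lt_trans w0.
rewrite h0 => h1; have := le_trans hw h1; rewrite lee_fin; lra.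
Qed.
End Meas.

Section Gap.
Context {R : realType}.

Lemma near_right (s : R) (P : R -> Prop) :
  (\forall z \near at_right s, P z) -> exists2 dl, 0 < dl & forall z, s < z < s + dl -> P z.
Proof.
move=> [e /= e0 H]; exists e => // z /andP[sz zd]; apply: H => //=.
rewrite /ball /= ltr_norml; apply/andP; split; lra.
Qed.

Arguments near_right {s P}.
Lemma gap (lt l r : R -> \bar R) (phit : R -> R) (d : R) :
  0 < d -> (forall t, 0 <= t -> (lt t <= l t)%E) ->
  (forall t, 0 <= t -> (l t + d%:E <= r t)%E) ->
  cadlag phit -> cadlag r -> (forall t, 0 <= t -> r t != -oo%E) ->
  forall s, 0 <= s -> exists2 dl, 0 < dl &
   (forall z, s <= z < s + dl -> ~ ~ (lt z < (phit z)%:E)%E) \/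
   (forall z, s <= z < s + dl -> ~ ~ ((phit z)%:E < r z)%E).
Proof.
move=> d0 hll hlr cphit cr rny s s0.
have HA : forall z, 0 <= z -> ~ (lt z < (phit z)%:E)%E -> r z = (fine (r z))%:E ->
    phit z + d <= fine (r z).
  move=> z z0 /negP; rewrite -leNgt => h1 h2.
  have := le_trans (leeD2r d%:E (le_trans h1 (hll z z0))) (hlr z z0).
  by rewrite h2 -EFinD lee_fin.
have HB : forall z, ~ ((phit z)%:E < r z)%E -> r z = (fine (r z))%:E ->
    fine (r z) <= phit z.
  by move=> z /negP; rewrite -leNgt => h1 h2; move: h1; rewrite h2 lee_fin.
have [phr _] := cphit s s0.
have [rr _] := cr s s0.
have d4 : 0 < d / 4 by rewrite divr_gt0.
have [d1 d10 H1] := near_right (cvgr_dist_lt _ _ phr _ d4).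
case E: (r s) => [R0| |].
- move: rr; rewrite E => /fine_cvgP [hf hc].
  have [d2 d20 H2] := near_right hf.
  have [d3 d30 H3] := near_right (cvgr_dist_lt _ _ hc _ d4).
  pose dl := Num.min d1 (Num.min d2 d3).
  have dl0 : 0 < dl by rewrite /dl !lt_min d10 d20 d30.
  have Q : forall z, s <= z < s + dl ->
      [/\ `|phit s - phit z| < d / 4, r z = (fine (r z))%:E & `|R0 - fine (r z)| < d / 4].
    move=> z /andP[sz zd].
    have [ezs|nzs] := eqVneq z s.
      by rewrite ezs E /= !subrr normr0; split.
    have szl : s < z by rewrite lt_neqAle eq_sym nzs sz.
    have hd1 : dl <= d1 by rewrite /dl ge_min lexx.
    have hd2 : dl <= d2 by rewrite /dl !ge_min lexx orbT.
    have hd3 : dl <= d3 by rewrite /dl !ge_min lexx !orbT.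
    split.
    + by apply: H1; apply/andP; split => //; lra.
    + by rewrite fineK //; apply: H2; apply/andP; split => //; lra.
    + by apply: H3; apply/andP; split => //; lra.
  exists dl => //.
  have [[z1 [hz1 T1]]|none] := pselect (exists z, s <= z < s + dl /\ ~ (lt z < (phit z)%:E)%E).
    right => z2 hz2 T2.
    have [q11 q12 q13] := Q z1 hz1.
    have [q21 q22 q23] := Q z2 hz2.
    have z10 : 0 <= z1 by case/andP: hz1 => h _; apply: le_trans h.
    have := HA z1 z10 T1 q12.
    have := HB z2 T2 q22.
    move: q11 q13 q21 q23; rewrite !ltr_norml.
    move=> /andP[? ?] /andP[? ?] /andP[? ?] /andP[? ?]; lra.
  left => z hz Tz; apply: none; exists z; split => //.
- move: (rr); rewrite E => /cvgeyPgt /(_ (phit s + d)) /near_right [d2 d20 H2].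
  exists (Num.min d1 d2); first by rewrite lt_min d10 d20.
  right => z /andP[sz zd] Tz.
  have [ezs|nzs] := eqVneq z s.
    by apply: Tz; rewrite ezs E ltry.
  have szl : s < z by rewrite lt_neqAle eq_sym nzs sz.
  have hd1 : Num.min d1 d2 <= d1 by rewrite ge_min lexx.
  have hd2 : Num.min d1 d2 <= d2 by rewrite ge_min lexx orbT.
  have h1 := H1 z ltac:(apply/andP; split => //; lra).
  have h2 := H2 z ltac:(apply/andP; split => //; lra).
  apply: Tz; apply: lt_trans h2; rewrite lte_fin.
  move: h1; rewrite ltr_norml => /andP[? ?]; lra.
- by move: (rny s s0); rewrite E.
Qed.
End Gap.

Arguments core {R Au Ad Bu Bd TA TB}.
Arguments gap {R lt l r phit d}.
Theorem corollary3p2 (R : realType) (l lt : R -> \bar R) (r rt : R -> \bar R)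
  (psi : R -> R) :
  Dminus l -> Dminus lt -> Dplus r -> Dplus rt ->
  (forall t, 0 <= t -> (lt t <= l t)%E) ->
  r = rt ->
  (exists2 d : R, 0 < d & forall t, 0 <= t -> (l t + d%:E <= r t)%E) ->
  D0 psi ->
  forall (phi eta etal etar phit etat etalt etart : R -> R),
    SP l r psi phi eta etal etar ->
    SP lt rt psi phit etat etalt etart ->
    forall t, 0 <= t -> etart t <= etar t /\ etalt t <= etal t.
Proof.
move=> Dl Dlt Dr Drt hll err [d d0 hlr] Dpsi phi eta etal etar phit etat etalt etart.
subst rt.
move=> [Dphi [Deta [hphi [hbd [heta [ndl [ndr [szl szr]]]]]]]].
move=> [Dphit [Detat [hphit [hbdt [hetat [ndlt [ndrt [szlt szrt]]]]]]]].
move=> t t0.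
pose TA z := ~ (lt z < (phit z)%:E)%E.
pose TB z := ~ ((phit z)%:E < r z)%E.
have props : forall (eta0 : R -> R) (A : set R), stieltjes_zero eta0 A ->
    [/\ Wit eta0 (fun z => ~ A z), LeftC eta0 (fun z => ~ A z),
        (~ ~ A 0 -> eta0 0 <= 0) & 0 <= eta0 0].
  move=> eta0 A [mu [hmu [h0 hI]]].
  have e00 : 0 <= eta0 0.
    by rewrite -lee_fin -hmu //; exact: measure_ge0.
  split => //.
  - move=> s u s0 su esu; exact: (@sz_wit _ mu eta0 A hmu hI s u s0 su esu).
  - move=> z z0 nA e e0.
    have Az : A z by apply: contrapT.
    case: (@sz_left _ mu eta0 A hmu h0 hI z (ltW z0) Az e e0) => [h|[w hw]].
      by exists 0; split; [rewrite lexx z0|lra].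
    by exists w.
  - move=> nA; have Az : A 0 by apply: contrapT.
    apply: ge_eps0 => e e0.
    case: (@sz_left _ mu eta0 A hmu h0 hI 0 (lexx 0) Az e e0) => [//|[w [/andP[w0 w0'] _]]].
    lra.
have [WA LA ZA A0] := props _ _ szlt.
have [WB LB ZB B0] := props _ _ szrt.
have [_ _ _ Au0] := props _ _ szl.
have [_ _ _ Bu0] := props _ _ szr.
have GA : forall z, 0 <= z -> TA z -> etar z - etart z <= etal z - etalt z.
  move=> z z0 /negP; rewrite -leNgt => h.
  have [h1 _] := hbd z z0.
  have := le_trans h (le_trans (hll z z0) h1); rewrite lee_fin.
  rewrite (hphi z z0) (hphit z z0) (heta z z0) (hetat z z0); lra.
have GB : forall z, 0 <= z -> TB z -> etal z - etalt z <= etar z - etart z.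
  move=> z z0 /negP; rewrite -leNgt => h.
  have [_ h1] := hbd z z0.
  have := le_trans h1 h; rewrite lee_fin.
  rewrite (hphi z z0) (hphit z z0) (heta z z0) (hetat z z0); lra.
have AB : forall z, 0 <= z -> TA z -> ~ TB z.
  move=> z z0 /negP; rewrite -leNgt => h1 /negP; rewrite -leNgt => h2.
  have := le_trans (le_trans (leeD2r d%:E (le_trans h1 (hll z z0))) (hlr z z0)) h2.
  rewrite -EFinD lee_fin; lra.
have F3 := gap d0 hll hlr Dphit (proj1 Dr) (proj1 (proj2 Dr)).
have := @core _ etal etalt etar etart TA TB ndl ndlt ndr ndrt WA WB LA LB ZA ZB Au0 Bu0 GA GB AB F3 t t0.
lra.
Qed.
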